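(* Let $\mathcal{C}$ be a binary linear code of length $n$, and map each codeword $\underline c=(c_0,\dots,c_{n-1})$ to its bipolar image $\underline s\in\{-1,+1\}^n\subset\mathbb{R}^n$, $s_t=1-2c_t$. Then the bipolar images of any four distinct codewords of $\mathcal{C}$ either are the vertices of a (non-degenerate) tetrahedron, i.e. are affinely independent in $\mathbb{R}^n$, or lie in a common two-dimensional plane and are the vertices of a rectangle. *)

(* Defs.v *)
From HB Require Import structures.
From mathcomp Require Import all_boot all_order all_algebra all_fingroup.
From mathcomp Require Import all_reals.
Set Implicit Arguments. Unset Strict Implicit. Unset Printing Implicit Defensive.
Import Order.TTheory GRing.Theory Num.Theory.
Local Open Scope ring_scope.

(* Binary codewords of length n are row vectors 'rV['F_2]_n; a binary linear
   code is an 'F_2-subspace C : {vspace 'rV['F_2]_n}. *)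

Definition bipolar (R : realType) (n : nat) (c : 'rV['F_2]_n) : 'rV[R]_n :=
  \row_(t < n) (1 - 2 * (nat_of_ord (c 0 t))%:R).

Definition dotv (R : realType) (n : nat) (u v : 'rV[R]_n) : R :=
  \sum_(t < n) u 0 t * v 0 t.

Definition diffmx (R : realType) (n : nat) (p : 'I_4 -> 'rV[R]_n) : 'M[R]_(3, n) :=
  \matrix_(i < 3) (p (lift ord0 i) - p ord0).

Definition affinely_independent4 (R : realType) (n : nat) (p : 'I_4 -> 'rV[R]_n) :=
  \rank (diffmx p) = 3%N.

Definition coplanar2 (R : realType) (n : nat) (p : 'I_4 -> 'rV[R]_n) :=
  \rank (diffmx p) = 2%N.

(* The four points, in some order A B C D (cyclic), are the vertices of a
   rectangle: ABCD is a parallelogram (B - A = C - D) with a right angle at A. *)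
Definition is_rectangle4 (R : realType) (n : nat) (p : 'I_4 -> 'rV[R]_n) :=
  exists s : 'S_4,
    let A := p (s 0) in let B := p (s 1) in
    let C := p (s 2) in let D := p (s 3) in
    B - A = C - D /\ dotv (B - A) (D - A) = 0.

(* Main.v *)
Require Import Defs.
From HB Require Import structures.
From mathcomp Require Import all_boot all_order all_algebra all_fingroup.
From mathcomp Require Import all_reals.
From mathcomp Require Import ring lra.
Import Order.TTheory GRing.Theory Num.Theory.
Local Open Scope ring_scope.

Lemma F2_cases (x : 'F_2) : x = 0 \/ x = 1.
Proof.
case: x => [[|[|k]] Hk]; [left|right|by []]; exact: val_inj.
Qed.

Lemma bipE (R : realType) (x y : 'F_2) :
  (1 - 2 * (nat_of_ord x)%:R) - (1 - 2 * (nat_of_ord y)%:R) =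
  (if y == 0 then -2 else 2) * (x != y)%:R :> R.
Proof.
have E1 : nat_of_ord (1 : 'F_2) = 1%N by [].
have E0 : nat_of_ord (0 : 'F_2) = 0%N by [].
case: (F2_cases x) => ->; case: (F2_cases y) => ->; rewrite ?E1 ?E0 /=.
all: rewrite ?mulr0 ?mulr1 ?subr0; lra.
Qed.

Lemma F2_xor (x y z : 'F_2) : x != y -> (x != z) != (y != z).
Proof.
by case: (F2_cases x) => ->; case: (F2_cases y) => ->; case: (F2_cases z) => ->.
Qed.

Lemma neq_coord n (u v : 'rV['F_2]_n) : u != v -> exists t, u 0 t != v 0 t.
Proof.
move=> H; apply/existsP; move: H; apply: contraR => /existsPn Hn.
apply/eqP/rowP => t; move: (Hn t); by rewrite negbK => /eqP.
Qed.

Lemma sum3 (R : realType) (F : 'I_3 -> R) :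
  \sum_i F i = F ord0 + F (lift ord0 ord0) + F (lift ord0 (lift ord0 ord0)).
Proof. by rewrite !big_ord_recl big_ord0 addr0 addrA. Qed.

Lemma sum2 (R : realType) (F : 'I_2 -> R) :
  \sum_i F i = F ord0 + F (lift ord0 ord0).
Proof. by rewrite !big_ord_recl big_ord0 addr0. Qed.

Lemma I3_cases (i : 'I_3) : [\/ i = ord0, i = lift ord0 ord0 | i = lift ord0 (lift ord0 ord0)].
Proof.
case: i => [[|[|[|k]]] Hk]; [apply: Or31|apply: Or32|apply: Or33|by []]; exact: val_inj.
Qed.

Lemma I2_cases (i : 'I_2) : i = ord0 \/ i = lift ord0 ord0.
Proof.
case: i => [[|[|k]] Hk]; [left|right|by []]; exact: val_inj.
Qed.

Lemma row_free_ker (R : realType) m n (M : 'M[R]_(m,n)) :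
  (forall x : 'rV_m, x *m M = 0 -> x = 0) -> row_free M.
Proof.
move=> H; rewrite -kermx_eq0; apply/eqP/row_matrixP => i.
by rewrite row0; apply: H; rewrite -row_mul mulmx_ker row0.
Qed.

Lemma rank2 (R : realType) n (A : 'M[R]_(3,n)) (i j : 'I_3) (x : 'rV_3) :
  x != 0 -> x *m A = 0 -> (exists t, A i t != 0 /\ A j t = 0) ->
  (exists t, A j t != 0 /\ A i t = 0) -> \rank A = 2%N.
Proof.
move=> xn0 xA [t1 [H1 H1']] [t2 [H2 H2']].
apply/eqP; rewrite eqn_leq; apply/andP; split.
  have := rank_leq_row A; rewrite leq_eqVlt => /orP [/eqP r3|//].
  have rf : row_free A by rewrite /row_free r3.
  by move: (xn0); rewrite -(mulmx_free_eq0 x rf) xA eqxx.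
pose f := fun k : 'I_2 => if k == ord0 then i else j.
apply: leq_trans (mxrankS (rowsub_sub f A)).
have : row_free (rowsub f A).
  apply: row_free_ker => y yA.
  have E t : (y *m rowsub f A) 0 t = y 0 ord0 * A i t + y 0 (lift ord0 ord0) * A j t.
    by rewrite mxE sum2 !mxE.
  have e1 := E t1; have e2 := E t2; rewrite yA mxE H1' mulr0 addr0 in e1.
  rewrite yA mxE H2' mulr0 add0r in e2.
  apply/rowP => k; rewrite mxE; case: (I2_cases k) => ->.
    by move/eqP: e1; rewrite eq_sym mulf_eq0 (negbTE H1) orbF => /eqP.
  by move/eqP: e2; rewrite eq_sym mulf_eq0 (negbTE H2) orbF => /eqP.
by rewrite /row_free => /eqP ->.
Qed.

Lemma comb (R : realType) (h100 h010 h001 h110 h101 h011 h111 : bool) :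
  [|| h100, h110, h101 | h111] ->
  [|| h010, h110, h011 | h111] ->
  [|| h001, h101, h011 | h111] ->
  [|| h100, h010, h101 | h011] ->
  [|| h100, h001, h110 | h011] ->
  [|| h010, h001, h110 | h101] ->
  (forall x1 x2 x3 : R, (h100 -> x1 = 0) -> (h010 -> x2 = 0) -> (h001 -> x3 = 0) ->
     (h110 -> x1 + x2 = 0) -> (h101 -> x1 + x3 = 0) -> (h011 -> x2 + x3 = 0) ->
     (h111 -> x1 + x2 + x3 = 0) -> [/\ x1 = 0, x2 = 0 & x3 = 0])
  \/ [&& ~~h100, ~~h010, ~~h001, ~~h110 & ~~h111]
  \/ [&& ~~h100, ~~h010, ~~h001, ~~h011 & ~~h111]
  \/ [&& ~~h100, ~~h010, ~~h001, ~~h101 & ~~h111].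
Proof.
case: h100; case: h010; case: h001; case: h110; case: h101; case: h011; case: h111 => H1 H2 H3 H4 H5 H6;
  try discriminate.
all: first [ by right; left | by right; right; left | by right; right; right | left].
all: move=> x1 x2 x3 E1 E2 E3 E4 E5 E6 E7;
          repeat match goal with
          | H : true -> _ |- _ => specialize (H isT)
          | H : false -> _ |- _ => clear H end.
all: clear H1 H2 H3 H4 H5 H6.
all: split.
all: lra.
Qed.

Theorem proposition4 (R : realType) (n : nat) (C : {vspace 'rV['F_2]_n})
    (c : 'I_4 -> 'rV['F_2]_n) :
  (forall i, c i \in C) -> injective c ->
  affinely_independent4 (fun i => bipolar R (c i)) \/
  (coplanar2 (fun i => bipolar R (c i)) /\ is_rectangle4 (fun i => bipolar R (c i))).
Proof.
move=> _ cinj.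
set p := fun i => bipolar R (c i).
pose sg t : R := if c ord0 0 t == 0 then -2 else 2.
pose bb j t := c j 0 t != c ord0 0 t.
have sg0 t : sg t != 0 by rewrite /sg; case: ifP => _; apply/eqP; lra.
have pE j t : p j 0 t = p ord0 0 t + sg t * (bb j t)%:R.
  rewrite -(bipE R (c j 0 t) (c ord0 0 t)) /p /bipolar !mxE; lra.
have AE (i : 'I_3) (t : 'I_n) : (Defs.diffmx p) i t = sg t * (bb (lift ord0 i) t)%:R.
  by rewrite /Defs.diffmx !mxE; apply: bipE.
clearbody p.
set J1 : 'I_4 := lift ord0 ord0.
set J2 : 'I_4 := lift ord0 (lift ord0 ord0).
set J3 : 'I_4 := lift ord0 (lift ord0 (lift ord0 ord0)).
set A := Defs.diffmx p.
have xAE (x : 'rV_3) t : (x *m A) 0 t =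
   sg t * (x 0 ord0 * (bb J1 t)%:R + x 0 (lift ord0 ord0) * (bb J2 t)%:R
           + x 0 (lift ord0 (lift ord0 ord0)) * (bb J3 t)%:R).
  by rewrite mxE sum3 !AE; ring.
have cov j : j != ord0 -> exists t, bb j t.
  move=> jn0; apply: neq_coord; apply: contra jn0 => /eqP /cinj ->; done.
have sep j k : j != k -> exists t, bb j t != bb k t.
  move=> jk; have [t Ht] : exists t, c j 0 t != c k 0 t.
    by apply: neq_coord; apply: contra jk => /eqP /cinj ->.
  by exists t; apply: F2_xor.
pose hb x y z := [exists t, [&& bb J1 t == x, bb J2 t == y & bb J3 t == z]].
have F1 t : hb (bb J1 t) (bb J2 t) (bb J3 t) by apply/existsP; exists t; rewrite !eqxx.
have [t1 e1] := cov J1 isT.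
have [t2 e2] := cov J2 isT.
have [t3 e3] := cov J3 isT.
have [t12 e12] := sep J1 J2 isT.
have [t13 e13] := sep J1 J3 isT.
have [t23 e23] := sep J2 J3 isT.
have := comb R (hb true false false) (hb false true false)
  (hb false false true) (hb true true false)
  (hb true false true) (hb false true true) (hb true true true).
move=> /(_ _ _ _ _ _ _) [].
- by move: (F1 t1) e1; case: (bb J1 t1); case: (bb J2 t1); case: (bb J3 t1) => // -> ; rewrite ?orbT.
- by move: (F1 t2) e2; case: (bb J1 t2); case: (bb J2 t2); case: (bb J3 t2) => // -> ; rewrite ?orbT.
- by move: (F1 t3) e3; case: (bb J1 t3); case: (bb J2 t3); case: (bb J3 t3) => // -> ; rewrite ?orbT.
- by move: (F1 t12) e12; case: (bb J1 t12); case: (bb J2 t12); case: (bb J3 t12) => // -> ; rewrite ?orbT.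
- by move: (F1 t13) e13; case: (bb J1 t13); case: (bb J2 t13); case: (bb J3 t13) => // -> ; rewrite ?orbT.
- by move: (F1 t23) e23; case: (bb J1 t23); case: (bb J2 t23); case: (bb J3 t23) => // -> ; rewrite ?orbT.
- move=> K; left; apply/eqP; apply: row_free_ker => x Hx.
  have Ex t : x 0 ord0 * (bb J1 t)%:R + x 0 (lift ord0 ord0) * (bb J2 t)%:R
           + x 0 (lift ord0 (lift ord0 ord0)) * (bb J3 t)%:R = 0.
    have := xAE x t; rewrite Hx mxE => /esym/eqP.
    by rewrite mulf_eq0 (negbTE (sg0 t)) /= => /eqP.
  have Hq a b d : hb a b d -> x 0 ord0 * a%:R + x 0 (lift ord0 ord0) * b%:R
           + x 0 (lift ord0 (lift ord0 ord0)) * d%:R = 0.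
    by move/existsP => [t /and3P [/eqP <- /eqP <- /eqP <-]]; exact: Ex.
  case: (K (x 0 ord0) (x 0 (lift ord0 ord0)) (x 0 (lift ord0 (lift ord0 ord0)))).
  1-7: by move/Hq; rewrite /= ?(mulr1, mulr0, addr0, add0r, mulr1n, mulr0n).
  move=> z1 z2 z3; apply/rowP => k; rewrite mxE; by case: (I3_cases k) => ->.
have rect (s : 'S_4) (a b d : 'I_4) : s 0 = ord0 -> s 1 = a -> s 2 = b -> s 3 = d ->
   (forall t, ~~ (bb a t && bb d t) /\ bb b t = bb a t || bb d t) -> is_rectangle4 p.
  move=> s0 s1 s2 s3 H; exists s; rewrite /= s0 s1 s2 s3; split.
    apply/rowP => t; rewrite !mxE !(pE a) !(pE b) !(pE d).
    move: (H t); case: (bb a t); case: (bb b t); case: (bb d t);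
      case=> /= H1 H2; try discriminate; ring.
  rewrite /dotv; apply: big1 => t _; rewrite !mxE !(pE a) !(pE d).
  move: (H t); case: (bb a t); case: (bb b t); case: (bb d t);
    case=> /= H1 H2; try discriminate; ring.
have conf (a b d : 'I_4) (ia id' : 'I_3) (s : 'S_4) (x : 'rV_3) :
   lift ord0 ia = a -> lift ord0 id' = d -> s 0 = ord0 -> s 1 = a -> s 2 = b -> s 3 = d ->
   (forall t, ~~ (bb a t && bb d t) /\ bb b t = bb a t || bb d t) ->
   x != 0 -> x *m A = 0 -> (exists t, bb a t) -> (exists t, bb d t) ->
   coplanar2 p /\ is_rectangle4 p.
  move=> ea ed s0 s1 s2 s3 H xn0 xA [ta hta] [td htd]; split; last exact: (rect s a b d).
  apply: (@rank2 R n A ia id' x xn0 xA).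
    exists ta; rewrite !AE ea ed hta.
    have [H1 _] := H ta; rewrite hta /= in H1; rewrite (negbTE H1) /= mulr0 mulr1.
    by split; [exact: sg0|].
  exists td; rewrite !AE ea ed htd.
  have [H1 _] := H td; rewrite htd andbT in H1; rewrite (negbTE H1) /= mulr0 mulr1.
  by split; [exact: sg0|].
case=> [/and5P [n1 n2 n3 n4 n5] | [/and5P [n1 n2 n3 n4 n5] | /and5P [n1 n2 n3 n4 n5]]]; right.
- have P t : ~~ (bb J1 t && bb J2 t) /\ bb J3 t = bb J1 t || bb J2 t.
    move: (F1 t); case: (bb J1 t); case: (bb J2 t); case: (bb J3 t) => h //;
    first [by case/negP: n1 | by case/negP: n2 | by case/negP: n3 | by case/negP: n4 | by case/negP: n5].
  apply: (conf J1 J3 J2 ord0 (lift ord0 ord0) (tperm J2 J3) (\row_k (if k == ord0 then 1 else if k == lift ord0 ord0 then 1 else -1))).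
  + by [].
  + by [].
  + by apply/val_inj; rewrite permE.
  + by apply/val_inj; rewrite permE.
  + by apply/val_inj; rewrite permE.
  + by apply/val_inj; rewrite permE.
  + exact: P.
  + by apply/negP => /eqP/rowP/(_ ord0); rewrite !mxE /= => /eqP; rewrite ?oppr_eq0 oner_eq0.
  + apply/rowP => t; rewrite xAE !mxE /=; case: (P t).
    by case: (bb J1 t); case: (bb J2 t); case: (bb J3 t) => /= H1 H2; try discriminate; ring.
  + by exists t1.
  + by exists t2.
- have P t : ~~ (bb J2 t && bb J3 t) /\ bb J1 t = bb J2 t || bb J3 t.
    move: (F1 t); case: (bb J1 t); case: (bb J2 t); case: (bb J3 t) => h //;
    first [by case/negP: n1 | by case/negP: n2 | by case/negP: n3 | by case/negP: n4 | by case/negP: n5].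
  apply: (conf J2 J1 J3 (lift ord0 ord0) (lift ord0 (lift ord0 ord0)) (tperm J1 J2) (\row_k (if k == ord0 then -1 else if k == lift ord0 ord0 then 1 else 1))).
  + by [].
  + by [].
  + by apply/val_inj; rewrite permE.
  + by apply/val_inj; rewrite permE.
  + by apply/val_inj; rewrite permE.
  + by apply/val_inj; rewrite permE.
  + exact: P.
  + by apply/negP => /eqP/rowP/(_ ord0); rewrite !mxE /= => /eqP; rewrite ?oppr_eq0 oner_eq0.
  + apply/rowP => t; rewrite xAE !mxE /=; case: (P t).
    by case: (bb J1 t); case: (bb J2 t); case: (bb J3 t) => /= H1 H2; try discriminate; ring.
  + by exists t2.
  + by exists t3.
- have P t : ~~ (bb J1 t && bb J3 t) /\ bb J2 t = bb J1 t || bb J3 t.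
    move: (F1 t); case: (bb J1 t); case: (bb J2 t); case: (bb J3 t) => h //;
    first [by case/negP: n1 | by case/negP: n2 | by case/negP: n3 | by case/negP: n4 | by case/negP: n5].
  apply: (conf J1 J2 J3 ord0 (lift ord0 (lift ord0 ord0)) (1%g) (\row_k (if k == ord0 then 1 else if k == lift ord0 ord0 then -1 else 1))).
  + by [].
  + by [].
  + by apply/val_inj; rewrite permE.
  + by apply/val_inj; rewrite permE.
  + by apply/val_inj; rewrite permE.
  + by apply/val_inj; rewrite permE.
  + exact: P.
  + by apply/negP => /eqP/rowP/(_ ord0); rewrite !mxE /= => /eqP; rewrite ?oppr_eq0 oner_eq0.
  + apply/rowP => t; rewrite xAE !mxE /=; case: (P t).
    by case: (bb J1 t); case: (bb J2 t); case: (bb J3 t) => /= H1 H2; try discriminate; ring.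
  + by exists t1.
  + by exists t3.
Qed.
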